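(* Let $\mathcal{E}_{tr}$ be a finite set of training environments, $\mathcal{H}_\Phi$ a class of representations $\Phi:\mathcal{X}\to\mathcal{Z}$ and $\mathcal{H}_w$ a class of classifiers $w:\mathcal{Z}\to\mathbb{R}^k$ satisfying affine closure (for all $w_1,w_2\in\mathcal{H}_w$ and $c\in\mathbb{R}$, the pointwise sum $w_1+w_2$ and pointwise multiple $cw$ lie in $\mathcal{H}_w$). Then $\hat{\mathcal{S}}^{\mathsf{IV}}=\hat{\mathcal{S}}^{\mathsf{EIRM}}$.
   Context: For each environment $e\in\mathcal{E}_{tr}$ there is a distribution of $(X^e,Y^e)$ with $X^e\in\mathcal{X}\subseteq\mathbb{R}^n$, $Y^e\in\mathcal{Y}\subseteq\mathbb{R}^k$; for a loss $\ell$, $R^e(f)=\mathbb{E}[\ell(f(X^e),Y^e)]$. $\mathcal{Z}\subseteq\mathbb{R}^d$. $\mathcal{S}^{\mathsf{IV}}$ is the set of $(\Phi,w)\in\mathcal{H}_\Phi\times\mathcal{H}_w$ with $R^e(w\circ\Phi)\le R^e(\bar w\circ\Phi)$ for all $\bar w\in\mathcal{H}_w$ and all $e\in\mathcal{E}_{tr}$; the set of invariant predictors is $\hat{\mathcal{S}}^{\mathsf{IV}}=\{w\circ\Phi:(\Phi,w)\in\mathcal{S}^{\mathsf{IV}}\}$. Ensemble game: given $\Phi\in\mathcal{H}_\Phi$, each environment $e$ chooses $w^e\in\mathcal{H}_w$ with utility $u_e=-R^e(w^{av}\circ\Phi)$, $w^{av}=\frac{1}{|\mathcal{E}_{tr}|}\sum_q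 w^q$. $\mathcal{S}^{\mathsf{EIRM}}$ is the set of $(\Phi,\{w^q\}_{q\in\mathcal{E}_{tr}})$ with $\Phi\in\mathcal{H}_\Phi$ and $\{w^q\}$ a pure Nash equilibrium of this game given $\Phi$ (no player can strictly increase its utility by unilaterally changing its $w^e$ within $\mathcal{H}_w$). $\hat{\mathcal{S}}^{\mathsf{EIRM}}=\{(\frac{1}{|\mathcal{E}_{tr}|}\sum_q w^q)\circ\Phi : (\Phi,\{w^q\})\in\mathcal{S}^{\mathsf{EIRM}}\}$. *)

(* Defs.v *)
From HB Require Import structures.
From mathcomp Require Import all_boot all_order all_algebra.
From mathcomp Require Import all_classical all_reals all_analysis.
Set Implicit Arguments. Unset Strict Implicit. Unset Printing Implicit Defensive.
Import Order.TTheory GRing.Theory Num.Theory.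
Local Open Scope classical_set_scope.
Local Open Scope ring_scope.

(* For each environment e, the pair
   (X^e, Y^e) is given by random variables Xe e : Omega -> R^n and
   Ye e : Omega -> R^k on a probability space (Omega, P e). *)

Definition risk (R : realType) (d : measure_display) (Omega : measurableType d)
  (E : finType) (n k : nat) (P : E -> probability Omega R)
  (Xe : E -> Omega -> 'rV[R]_n) (Ye : E -> Omega -> 'rV[R]_k)
  (loss : 'rV[R]_k -> 'rV[R]_k -> R) (e : E) (f : 'rV[R]_n -> 'rV[R]_k) : \bar R :=
  (\int[P e]_om (loss (f (Xe e om)) (Ye e om))%:E)%E.

Definition affine_closed (R : realType) (dz k : nat)
  (Hw : set ('rV[R]_dz -> 'rV[R]_k)) : Prop :=
  (forall w1 w2, Hw w1 -> Hw w2 -> Hw (fun z => w1 z + w2 z)) /\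
  (forall (c : R) w, Hw w -> Hw (fun z => c *: w z)).

Definition wavg (R : realType) (E : finType) (dz k : nat)
  (ws : E -> 'rV[R]_dz -> 'rV[R]_k) : 'rV[R]_dz -> 'rV[R]_k :=
  fun z => (#|E|%:R)^-1 *: \sum_(q : E) ws q z.

Definition deviate (R : realType) (E : finType) (dz k : nat)
  (ws : E -> 'rV[R]_dz -> 'rV[R]_k) (e : E) (w' : 'rV[R]_dz -> 'rV[R]_k) :
  E -> 'rV[R]_dz -> 'rV[R]_k :=
  fun q => if q == e then w' else ws q.

Definition S_IV_hat (R : realType) (d : measure_display) (Omega : measurableType d)
  (E : finType) (n dz k : nat) (P : E -> probability Omega R)
  (Xe : E -> Omega -> 'rV[R]_n) (Ye : E -> Omega -> 'rV[R]_k)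
  (loss : 'rV[R]_k -> 'rV[R]_k -> R)
  (HPhi : set ('rV[R]_n -> 'rV[R]_dz)) (Hw : set ('rV[R]_dz -> 'rV[R]_k))
  : set ('rV[R]_n -> 'rV[R]_k) :=
  [set f | exists Phi w, [/\ HPhi Phi, Hw w,
     (forall (e : E) wbar, Hw wbar ->
        (risk P Xe Ye loss e (w \o Phi) <= risk P Xe Ye loss e (wbar \o Phi))%E)
     & f = w \o Phi]].

Definition utility (R : realType) (d : measure_display) (Omega : measurableType d)
  (E : finType) (n dz k : nat) (P : E -> probability Omega R)
  (Xe : E -> Omega -> 'rV[R]_n) (Ye : E -> Omega -> 'rV[R]_k)
  (loss : 'rV[R]_k -> 'rV[R]_k -> R) (Phi : 'rV[R]_n -> 'rV[R]_dz)
  (e : E) (ws : E -> 'rV[R]_dz -> 'rV[R]_k) : \bar R :=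
  (- risk P Xe Ye loss e (wavg ws \o Phi))%E.

Definition pure_nash (R : realType) (d : measure_display) (Omega : measurableType d)
  (E : finType) (n dz k : nat) (P : E -> probability Omega R)
  (Xe : E -> Omega -> 'rV[R]_n) (Ye : E -> Omega -> 'rV[R]_k)
  (loss : 'rV[R]_k -> 'rV[R]_k -> R) (Hw : set ('rV[R]_dz -> 'rV[R]_k))
  (Phi : 'rV[R]_n -> 'rV[R]_dz) (ws : E -> 'rV[R]_dz -> 'rV[R]_k) : Prop :=
  (forall q, Hw (ws q)) /\
  forall (e : E) w', Hw w' ->
    ~ (utility P Xe Ye loss Phi e ws < utility P Xe Ye loss Phi e (deviate ws e w'))%E.

Definition S_EIRM_hat (R : realType) (d : measure_display) (Omega : measurableType d)
  (E : finType) (n dz k : nat) (P : E -> probability Omega R)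
  (Xe : E -> Omega -> 'rV[R]_n) (Ye : E -> Omega -> 'rV[R]_k)
  (loss : 'rV[R]_k -> 'rV[R]_k -> R)
  (HPhi : set ('rV[R]_n -> 'rV[R]_dz)) (Hw : set ('rV[R]_dz -> 'rV[R]_k))
  : set ('rV[R]_n -> 'rV[R]_k) :=
  [set f | exists Phi ws, [/\ HPhi Phi, pure_nash P Xe Ye loss Hw Phi ws
     & f = wavg ws \o Phi]].

(* Main.v *)
Require Import Defs.
From HB Require Import structures.
From mathcomp Require Import all_boot all_order all_algebra.
From mathcomp Require Import all_classical all_reals all_analysis.
Set Implicit Arguments. Unset Strict Implicit. Unset Printing Implicit Defensive.
Import Order.TTheory GRing.Theory Num.Theory.
Local Open Scope classical_set_scope.
Local Open Scope ring_scope.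

Lemma zmod_aux (V : zmodType) (a b c : V) : a + - (b + c) + b + c = a.
Proof. by rewrite opprD addrA (addrAC (a - b)) addrNK addrNK. Qed.

Section Aux.
Variables (R : realType) (dz k : nat) (Hw : set ('rV[R]_dz -> 'rV[R]_k)).
Hypothesis HA : affine_closed Hw.

Lemma Hw_scale c w : Hw w -> Hw (fun z => c *: w z).
Proof. by case: HA => _ H; apply: H. Qed.

Lemma Hw_add w1 w2 : Hw w1 -> Hw w2 -> Hw (fun z => w1 z + w2 z).
Proof. by case: HA => H _; apply: H. Qed.

Lemma Hw_zero w0 : Hw w0 -> Hw (fun _ => 0).
Proof.
move=> H; have := Hw_scale 0 H.
by have -> : (fun z => 0 *: w0 z) = (fun _ => 0) by apply: funext => z; rewrite scale0r.
Qed.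

Lemma Hw_sum (I : Type) (F : I -> 'rV[R]_dz -> 'rV[R]_k) w0 (r : seq I) :
  Hw w0 -> (forall q, Hw (F q)) -> Hw (fun z => \sum_(q <- r) F q z).
Proof.
move=> H0 HF; elim: r => [|a r IH].
  have -> : (fun z => \sum_(q <- [::]) F q z) = (fun _ => 0)
    by apply: funext => z; rewrite big_nil.
  exact: Hw_zero H0.
have -> : (fun z => \sum_(q <- a :: r) F q z) = (fun z => F a z + \sum_(q <- r) F q z)
  by apply: funext => z; rewrite big_cons.
exact: Hw_add.
Qed.
End Aux.

Theorem corollary1 (R : realType) (d : measure_display) (Omega : measurableType d)
  (E : finType) (n dz k : nat) (P : E -> probability Omega R)
  (Xe : E -> Omega -> 'rV[R]_n) (Ye : E -> Omega -> 'rV[R]_k)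
  (loss : 'rV[R]_k -> 'rV[R]_k -> R)
  (HPhi : set ('rV[R]_n -> 'rV[R]_dz)) (Hw : set ('rV[R]_dz -> 'rV[R]_k)) :
  (0 < #|E|)%N ->
  affine_closed Hw ->
  S_IV_hat P Xe Ye loss HPhi Hw = S_EIRM_hat P Xe Ye loss HPhi Hw.
Proof.
move=> E0 HA.
have NZ : (#|E|%:R : R) != 0 by rewrite pnatr_eq0 -lt0n.
apply/seteqP; split => f.
- case=> Phi [w [HP Hww Hinv ->]].
  have Hav : wavg (fun _ : E => w) = w.
    apply: funext => z; rewrite /wavg sumr_const.
    by rewrite -[w z *+ _]scaler_nat scalerA mulVf // scale1r.

  exists Phi, (fun _ => w); split => //; last by rewrite Hav.
  split => // e w' Hw'.
  rewrite /utility Hav lteN2; apply/negP; rewrite -leNgt.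
  apply: Hinv.
  rewrite /wavg /deviate.
  apply: Hw_scale => //.
  have HF : forall q, Hw (if q == e then w' else w) by move=> q; case: (q == e).
  have HH := (@Hw_sum _ _ _ _ HA _ (fun q => if q == e then w' else w) _ (index_enum E) Hww HF). exact HH.
- case=> Phi [ws [HP [Hws Hnash] ->]].
  have Hq0 : exists q0 : E, True.
    by case/card_gt0P: E0 => q0 _; exists q0.
  case: Hq0 => q0 _.
  have Hwavg : Hw (wavg ws).
    rewrite /wavg; apply: Hw_scale => //.
    exact: (Hw_sum HA (index_enum E) (Hws q0) Hws).
  exists Phi, (wavg ws); split => // e wbar Hwb.
  pose w' := fun z => (#|E|%:R : R) *: wbar z + (- 1) *: (\sum_(q : E) ws q z) + ws e z.
  have HS : Hw (fun z => \sum_(q : E) ws q z)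
    by exact: (Hw_sum HA (index_enum E) (Hws q0) Hws).
  have Hw' : Hw w'.
    exact: (Hw_add HA (Hw_add HA (Hw_scale HA (#|E|%:R) Hwb) (Hw_scale HA (-1) HS)) (Hws e)).
  have Hdev : wavg (deviate ws e w') = wbar.
    apply: funext => z; rewrite /wavg /deviate (bigD1 e) //= eqxx.
    have -> : \sum_(i | i != e) (if i == e then w' else ws i) z
              = \sum_(i | i != e) ws i z.
      by apply: eq_bigr => i /negbTE ->.
    rewrite /w' [\sum_q ws q z](bigD1 e) //= scaleN1r.
    rewrite (@zmod_aux 'rV[R]_k (#|E|%:R *: wbar z)).
    by rewrite scalerA mulVf // scale1r.
  have := Hnash e w' Hw'.
  by rewrite /utility Hdev lteN2 => /negP; rewrite -leNgt.
Qed.
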